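(* Let $y\in\mathbb{R}^n$, $\lambda\ge0$, $i\in[n]$ and let $J=[j_1:j_2]\subseteq[n]$ be an interval with $i\in J$. For $a,b\in\mathbb{R}$ let $$L^{J,a,b}(\theta_J)=\frac12\sum_{j=j_1}^{j_2}(y_j-\theta_j)^2+\lambda\Big(\sum_{j=j_1}^{j_2-1}|\theta_{j+1}-\theta_j|+|\theta_{j_1}-a|+|\theta_{j_2}-b|\Big),\qquad \theta_J=(\theta_{j_1},\dots,\theta_{j_2})\in\mathbb{R}^{|J|},$$ and let $\hat\theta^{J,a,b}$ be its minimizer, with $\hat\theta^{J,a,b}_i$ its entry indexed by $i$. Then $$\sup_{a,b\in\mathbb{R}}\hat\theta^{J,a,b}_i\le\max_{I\subseteq J \text{ interval},\ i\in I}\Big(\overline{y}_I-2\lambda\frac{C_{I,J}}{|I|}\Big).$$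
   Context: An interval is $[a:b]=\{a,\dots,b\}\subseteq[n]$. $\overline{y}_I$ is the average of $y_j$, $j\in I$. For intervals $I\subseteq J=[j_1:j_2]$: $C_{I,J}=1$ if $I$ contains neither $j_1$ nor $j_2$; $C_{I,J}=-1$ if $I=J$; $C_{I,J}=0$ otherwise. *)

(* Defs.v *)
(* Indices are natural numbers 1..n; vectors in R^n are
   represented as functions nat -> R (only entries 1..n are ever used). *)
From mathcomp Require Import all_boot all_order all_algebra.
Set Implicit Arguments. Unset Strict Implicit. Unset Printing Implicit Defensive.
Import Order.TTheory GRing.Theory Num.Theory.
Local Open Scope ring_scope.

Definition avg (R : realFieldType) (y : nat -> R) (k1 k2 : nat) : R :=
  (\sum_(k1 <= j < k2.+1) y j) / (k2.+1 - k1)%:R.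

Definition CIJ (R : realFieldType) (k1 k2 j1 j2 : nat) : R :=
  if (k1 == j1) && (k2 == j2) then -1
  else if (j1 < k1)%N && (k2 < j2)%N then 1 else 0.

Definition LJ (R : realFieldType) (y : nat -> R) (lam : R) (j1 j2 : nat)
  (a b : R) (theta : nat -> R) : R :=
  2^-1 * (\sum_(j1 <= j < j2.+1) (y j - theta j) ^+ 2)
  + lam * ((\sum_(j1 <= j < j2) `|theta j.+1 - theta j|)
           + `|theta j1 - a| + `|theta j2 - b|).

Definition is_minimizer (R : realFieldType) (y : nat -> R) (lam : R)
  (j1 j2 : nat) (a b : R) (theta : nat -> R) : Prop :=
  forall phi : nat -> R, LJ y lam j1 j2 a b theta <= LJ y lam j1 j2 a b phi.

Definition Ival (R : realFieldType) (y : nat -> R) (lam : R)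
  (j1 j2 k1 k2 : nat) : R :=
  avg y k1 k2 - 2 * lam * CIJ R k1 k2 j1 j2 / (k2.+1 - k1)%:R.

(* The default element of the big max is the value for I = [i:i], which is
   itself a member of the family, so this is exactly the maximum. *)
Definition maxI (R : realFieldType) (y : nat -> R) (lam : R)
  (j1 j2 i : nat) : R :=
  \big[Num.max/Ival y lam j1 j2 i i]_(k1 <- iota j1 (i.+1 - j1))
    \big[Num.max/Ival y lam j1 j2 i i]_(k2 <- iota i (j2.+1 - i))
      Ival y lam j1 j2 k1 k2.

(* Main.v *)
Require Import Defs.
From mathcomp Require Import all_boot all_order all_algebra.
From mathcomp Require Import zify ring lra.
Import Order.TTheory GRing.Theory Num.Theory.
Local Open Scope ring_scope.

Lemma le_bigmax_seq (R : realFieldType) (d : R) (s : seq nat) (F : nat -> R) x :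
  x \in s -> F x <= \big[Num.max/d]_(z <- s) F z.
Proof.
elim: s => [//|z s IH]; rewrite inE big_cons => /orP [/eqP ->|xs].
  by rewrite le_max lexx.
by rewrite le_max (IH xs) orbT.
Qed.

Lemma sum_ind (R : realFieldType) (a b x : nat) (c : R) :
  \sum_(a <= j < b) (if j == x then c else 0) = if (a <= x < b)%N then c else 0.
Proof.
elim: b => [|b IH]; first by rewrite big_geq //; case: ifP => //; lia.
case: (leqP a b) => hab.
  rewrite big_nat_recr //= IH.
  case: (eqVneq b x) => [hbx|hbx]; first subst b.
    have -> : (a <= x < x)%N = false by lia.
    have -> : (a <= x < x.+1)%N = true by lia.
    by rewrite add0r.
  rewrite addr0; congr (if _ then _ else _); lia.
rewrite big_geq //; case: ifP => //; lia.
Qed.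

Lemma sum_range (R : realFieldType) (j1 j2 k1 k2 : nat) (g : nat -> R) :
  (j1 <= k1)%N -> (k1 <= k2)%N -> (k2 <= j2)%N ->
  \sum_(j1 <= j < j2.+1) (if (k1 <= j <= k2)%N then g j else 0)
  = \sum_(k1 <= j < k2.+1) g j.
Proof.
move=> h1 h2 h3.
rewrite (@big_cat_nat _ _ _ k1 j1 j2.+1) /=; [|lia|lia].
rewrite (@big_cat_nat _ _ _ k2.+1 k1) /=; [|lia|lia].
rewrite big1_seq ?add0r; last first.
  move=> j /andP [_]; rewrite mem_index_iota => hj; case: ifP => //; lia.
rewrite [X in _ + X]big1_seq ?addr0; last first.
  move=> j /andP [_]; rewrite mem_index_iota => hj; case: ifP => //; lia.
apply: eq_big_nat => j hj; case: ifP => //; lia.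
Qed.

Lemma exists_k1 (R : realFieldType) (theta : nat -> R) (t : R) (j1 i : nat) :
  (j1 <= i)%N -> t <= theta i ->
  exists k1, [/\ (j1 <= k1 <= i)%N,
    (forall j, (k1 <= j <= i)%N -> t <= theta j) &
    ((j1 < k1)%N -> theta k1.-1 < t)].
Proof.
move=> hi ht.
suff: forall d k, (k - j1 = d)%N -> (j1 <= k <= i)%N ->
  (forall j, (k <= j <= i)%N -> t <= theta j) ->
  exists k1, [/\ (j1 <= k1 <= i)%N,
    (forall j, (k1 <= j <= i)%N -> t <= theta j) &
    ((j1 < k1)%N -> theta k1.-1 < t)].
  move=> H; apply: (H _ i erefl); first lia.
  by move=> j hj; have -> : j = i by lia.
elim=> [|d IH] k hd hk hall.
  exists k; split => //; lia.
case: (ltP (theta k.-1) t) => hl.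
  by exists k; split.
apply: (IH k.-1); [lia|lia|].
move=> j hj; case: (eqVneq j k.-1) => [->//|hne]; apply: hall; lia.
Qed.

Lemma exists_k2 (R : realFieldType) (theta : nat -> R) (t : R) (i j2 : nat) :
  (i <= j2)%N -> t <= theta i ->
  exists k2, [/\ (i <= k2 <= j2)%N,
    (forall j, (i <= j <= k2)%N -> t <= theta j) &
    ((k2 < j2)%N -> theta k2.+1 < t)].
Proof.
move=> hi ht.
suff: forall d k, (j2 - k = d)%N -> (i <= k <= j2)%N ->
  (forall j, (i <= j <= k)%N -> t <= theta j) ->
  exists k2, [/\ (i <= k2 <= j2)%N,
    (forall j, (i <= j <= k2)%N -> t <= theta j) &
    ((k2 < j2)%N -> theta k2.+1 < t)].
  move=> H; apply: (H _ i erefl); first lia.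
  by move=> j hj; have -> : j = i by lia.
elim=> [|d IH] k hd hk hall.
  exists k; split => //; lia.
case: (ltP (theta k.+1) t) => hl.
  by exists k; split.
apply: (IH k.+1); [lia|lia|].
move=> j hj; case: (eqVneq j k.+1) => [->//|hne]; apply: hall; lia.
Qed.

Theorem lemma4 (R : realFieldType) (n : nat) (y : nat -> R) (lam : R)
  (i j1 j2 : nat) :
  0 <= lam -> (1 <= j1)%N -> (j1 <= i)%N -> (i <= j2)%N -> (j2 <= n)%N ->
  forall (a b : R) (theta : nat -> R),
    is_minimizer y lam j1 j2 a b theta ->
    theta i <= maxI y lam j1 j2 i.
Proof.
move=> hlam hj1 hi1 hi2 _ a b theta hmin.
set t := theta i.
have [k1 [hk1 hall1 hb1]] := @exists_k1 R theta t j1 i hi1 (lexx t).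
have [k2 [hk2 hall2 hb2]] := @exists_k2 R theta t i j2 hi2 (lexx t).
have hk12 : (k1 <= k2)%N by lia.
have hallI : forall j, (k1 <= j <= k2)%N -> t <= theta j.
  move=> j hj; case: (leqP j i) => hji; [apply: hall1|apply: hall2]; lia.
set m : R := (k2.+1 - k1)%:R.
have hm : 0 < m by rewrite /m ltr0n; lia.
set Sy := \sum_(k1 <= j < k2.+1) y j.
set St := \sum_(k1 <= j < k2.+1) theta j.
set c : R := (if k1 == j1 then 1 else -1) + (if k2 == j2 then 1 else -1).
have claim : forall e, 0 < e -> ((j1 < k1)%N -> e <= t - theta k1.-1) ->
    ((k2 < j2)%N -> e <= t - theta k2.+1) ->
    0 <= e * (Sy - St) + e ^+ 2 * m / 2 + lam * (e * c).
  move=> e he he1 he2.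
  set phi := fun j => if (k1 <= j <= k2)%N then theta j - e else theta j.
  have hQ : \sum_(j1 <= j < j2.+1) (y j - phi j) ^+ 2 =
      \sum_(j1 <= j < j2.+1) (y j - theta j) ^+ 2 + (2 * e * (Sy - St) + e ^+ 2 * m).
    have hI : \sum_(k1 <= j < k2.+1) (2 * e * (y j - theta j) + e ^+ 2)
        = 2 * e * (Sy - St) + e ^+ 2 * m.
      by rewrite big_split /= -mulr_sumr sumrB sumr_const_nat /m mulr_natr.
    rewrite -hI -(@sum_range R j1 j2 k1 k2); [|lia|lia|lia].
    rewrite -big_split /=; apply: eq_big_nat => j hj; rewrite /phi.
    by case: ifP => _; [ring|ring].
  have hP : \sum_(j1 <= j < j2) `|phi j.+1 - phi j| <=
      \sum_(j1 <= j < j2) `|theta j.+1 - theta j|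
      - (if (j1 < k1)%N then e else 0) - (if (k2 < j2)%N then e else 0).
    have -> : (j1 < k1)%N = (j1 <= k1.-1 < j2)%N by apply/idP/idP; lia.
    have -> : (k2 < j2)%N = (j1 <= k2 < j2)%N by apply/idP/idP; lia.
    rewrite -!sum_ind -!sumrB; apply: ler_sum_nat => j hj.
    rewrite /phi.
    case: (eqVneq j k1.-1) => [hjk|hjk].
      have -> : (j == k2) = false by apply/negbTE/eqP; lia.
      have -> : (k1 <= j.+1 <= k2)%N = true by lia.
      have -> : (k1 <= j <= k2)%N = false by lia.
      have h1 : t <= theta j.+1 by apply: hallI; lia.
      have h2 : e <= t - theta j by rewrite hjk; apply: he1; lia.
      rewrite !ger0_norm; [lra|lra|lra].
    case: (eqVneq j k2) => [hjk2|hjk2].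
      have -> : (k1 <= j.+1 <= k2)%N = false by lia.
      have -> : (k1 <= j <= k2)%N = true by lia.
      have h1 : t <= theta j by apply: hallI; lia.
      have h2 : e <= t - theta j.+1 by rewrite hjk2; apply: he2; lia.
      rewrite !ler0_norm; [lra|lra|lra].
    have -> : (k1 <= j.+1 <= k2)%N = (k1 <= j <= k2)%N by apply/idP/idP; lia.
    case: ifP => _; rewrite !subr0; last by [].
    by rewrite opprB addrA subrK addrC.
  have hE : `|phi j1 - a| + `|phi j2 - b| <= `|theta j1 - a| + `|theta j2 - b|
      + (if k1 == j1 then e else 0) + (if k2 == j2 then e else 0).
    have hA : `|phi j1 - a| <= `|theta j1 - a| + (if k1 == j1 then e else 0).
      rewrite /phi; case: (eqVneq k1 j1) => [hk|hk].
        have -> : (k1 <= j1 <= k2)%N = true by lia.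
        have -> : theta j1 - e - a = (theta j1 - a) - e by ring.
        by apply: le_trans (ler_normB _ _) _; rewrite (ger0_norm (ltW he)).
      have -> : (k1 <= j1 <= k2)%N = false by lia.
      by rewrite addr0.
    have hB : `|phi j2 - b| <= `|theta j2 - b| + (if k2 == j2 then e else 0).
      rewrite /phi; case: (eqVneq k2 j2) => [hk|hk].
        have -> : (k1 <= j2 <= k2)%N = true by lia.
        have -> : theta j2 - e - b = (theta j2 - b) - e by ring.
        by apply: le_trans (ler_normB _ _) _; rewrite (ger0_norm (ltW he)).
      have -> : (k1 <= j2 <= k2)%N = false by lia.
      by rewrite addr0.
    lra.
  have hpen : (\sum_(j1 <= j < j2) `|phi j.+1 - phi j|) + `|phi j1 - a| + `|phi j2 - b|
      <= (\sum_(j1 <= j < j2) `|theta j.+1 - theta j|) + `|theta j1 - a| + `|theta j2 - b|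
         + e * c.
    rewrite /c; case: (eqVneq k1 j1) => hk1'; case: (eqVneq k2 j2) => hk2';
    move: hP hE.
    - have -> : (j1 < k1)%N = false by lia.
      have -> : (k2 < j2)%N = false by lia.
      have -> : (k1 == j1) = true by apply/eqP; lia.
      have -> : (k2 == j2) = true by apply/eqP; lia.
      move=> *; lra.
    - have -> : (j1 < k1)%N = false by lia.
      have -> : (k2 < j2)%N = true by lia.
      have -> : (k1 == j1) = true by apply/eqP; lia.
      have -> : (k2 == j2) = false by apply/eqP; lia.
      move=> *; lra.
    - have -> : (j1 < k1)%N = true by lia.
      have -> : (k2 < j2)%N = false by lia.
      have -> : (k1 == j1) = false by apply/eqP; lia.
      have -> : (k2 == j2) = true by apply/eqP; lia.
      move=> *; lra.
    - have -> : (j1 < k1)%N = true by lia.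
      have -> : (k2 < j2)%N = true by lia.
      have -> : (k1 == j1) = false by apply/eqP; lia.
      have -> : (k2 == j2) = false by apply/eqP; lia.
      move=> *; lra.
  have hlp := ler_wpM2l hlam hpen.
  have := hmin phi; rewrite /LJ hQ.
  move: hlp; set P0 := (\sum_(j1 <= j < j2) _ + _ + _).
  move=> hlp hle; lra.
have hD : 0 <= Sy - St + lam * c.
  rewrite leNgt; apply/negP => hD.
  set d1 : R := if (j1 < k1)%N then t - theta k1.-1 else 1.
  set d2 : R := if (k2 < j2)%N then t - theta k2.+1 else 1.
  have hd1 : 0 < d1 by rewrite /d1; case: ifP => h; [rewrite subr_gt0; exact: hb1|exact: ltr01].
  have hd2 : 0 < d2 by rewrite /d2; case: ifP => h; [rewrite subr_gt0; exact: hb2|exact: ltr01].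
  set D := Sy - St + lam * c in hD *.
  have hDm : 0 < - D / m by apply: divr_gt0 => //; lra.
  set e := Num.min (Num.min d1 d2) (- D / m).
  have he : 0 < e by rewrite !lt_min hd1 hd2 hDm.
  have he1 : e <= d1 by rewrite !ge_min lexx.
  have he2 : e <= d2 by rewrite !ge_min lexx orbT.
  have he3 : e <= - D / m by rewrite ge_min lexx orbT.
  have he3' : e * m <= - D by rewrite -ler_pdivlMr.
  have := claim e he.
  have H1 : (j1 < k1)%N -> e <= t - theta k1.-1 by move=> h; move: he1; rewrite /d1 h.
  have H2 : (k2 < j2)%N -> e <= t - theta k2.+1 by move=> h; move: he2; rewrite /d2 h.
  move=> /(_ H1 H2) hc.
  have : e * (D + e * m / 2) < 0.
    rewrite pmulr_rlt0 //; lra.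
  rewrite /D; nra.
have hSt : t * m <= St.
  rewrite /m mulr_natr -sumr_const_nat; apply: ler_sum_nat => j hj; apply: hallI; lia.
have hmem1 : k1 \in iota j1 (i.+1 - j1) by rewrite mem_iota; lia.
have hmem2 : k2 \in iota i (j2.+1 - i) by rewrite mem_iota; lia.
rewrite /maxI.
apply: le_trans (@le_bigmax_seq R _ _ (fun k => \big[Num.max/Ival y lam j1 j2 i i]_(k' <- iota i (j2.+1 - i)) Ival y lam j1 j2 k k') _ hmem1).
apply: le_trans (@le_bigmax_seq R _ _ (fun k' => Ival y lam j1 j2 k1 k') _ hmem2).
rewrite /Ival /avg -/m -/Sy -mulrBl ler_pdivlMr //.
move: hD; rewrite /CIJ /c.
have -> : (j1 < k1)%N = ~~ (k1 == j1) by apply/idP/idP; lia.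
have -> : (k2 < j2)%N = ~~ (k2 == j2) by apply/idP/idP; lia.
by case: (k1 == j1); case: (k2 == j2) => /= hD; clear -hD hSt; lra.
Qed.
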